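(* Let $E^2$ denote the Stokes operator in cardioid coordinates $(\mu,\nu,\varphi)$, acting on functions $\psi(\mu,\nu)$ with $\mu,\nu>0$, by $$E^2\psi=(\mu^2+\nu^2)^3\left[\frac{\partial^2\psi}{\partial \mu^2}+\frac{3\mu^2-\nu^2}{\mu(\mu^2+\nu^2)}\frac{\partial\psi}{\partial \mu}+\frac{3\nu^2-\mu^2}{\nu(\mu^2+\nu^2)}\frac{\partial\psi}{\partial \nu}+\frac{\partial^2\psi}{\partial \nu^2}\right].$$ Then the equation $E^2\psi=0$ $R$-separates variables with $R(\mu,\nu)=\sqrt{2}(\mu^2+\nu^2)$: for twice differentiable, nowhere vanishing $M$ and $N$, the function $\psi(\mu,\nu)=\frac{1}{\sqrt2(\mu^2+\nu^2)}M(\mu)N(\nu)$ satisfies $E^2\psi=0$ if and only if there is a constant $\lambda$ with $$\frac{M''}{M}-\frac{1}{\mu}\frac{M'}{M}=\lambda=-\frac{N''}{N}+\frac{1}{\nu}\frac{N'}{N}.$$ Moreover, for $\lambda=n^2>0$ the solutions are exactly $$M(\mu)=c_1\mu I_1(n\mu)+c_2\mu K_1(n\mu),\qquad N(\nu)=c_3\nu J_1(n\nu)+c_4\nu Y_1(n\nu),$$ with arbitrary constants $c_1,\dots,c_4$; in particular every function $\psi(\mu,\nu)=\frac{1}{\mu^2+\nu^2}\big[c_1\mu I_1(n\mu)+c_2\mu K_1(n\mu)\big]\big[c_3\nu J_1(n\nu)+c_4\nu Y_1(n\nu)\big]$ with $n>0$ satisfies $E^2\psi=0$.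
   Context: Cardioid coordinates $(\mu,\nu,\varphi)$, $\mu,\nu\ge0$, $\varphi\in[0,2\pi)$, are given by $x=\frac{\mu\nu\cos\varphi}{(\mu^2+\nu^2)^2}$, $y=\frac{\mu\nu\sin\varphi}{(\mu^2+\nu^2)^2}$, $z=\frac{\mu^2-\nu^2}{2(\mu^2+\nu^2)^2}$. For a rotational coordinate system $x=\rho(q_1,q_2)\cos\varphi$, $y=\rho(q_1,q_2)\sin\varphi$, $z=z(q_1,q_2)$, with $h_i=\big((\partial_{q_i}\rho)^2+(\partial_{q_i}z)^2\big)^{-1/2}$ and $\varpi=|\rho|$, the Stokes operator is $E^2=h_1h_2\varpi\big[\partial_{q_1}\big(\tfrac{h_1}{h_2\varpi}\partial_{q_1}\big)+\partial_{q_2}\big(\tfrac{h_2}{h_1\varpi}\partial_{q_2}\big)\big]$; in cardioid coordinates this is the displayed formula. $J_1,Y_1$ are the Bessel functions of order one of the first and second kind, and $I_1,K_1$ the modified Bessel functions of order one of the first and second kind. *)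

(* Defs.v *)
From Stdlib Require Import Reals Arith Factorial.
From Coquelicot Require Import Coquelicot.
Open Scope R_scope.

Definition d_mu (psi : R -> R -> R) (mu nu : R) : R :=
  Derive (fun m => psi m nu) mu.
Definition d_nu (psi : R -> R -> R) (mu nu : R) : R :=
  Derive (fun n => psi mu n) nu.
Definition d_mumu (psi : R -> R -> R) (mu nu : R) : R :=
  Derive (fun m => Derive (fun m' => psi m' nu) m) mu.
Definition d_nunu (psi : R -> R -> R) (mu nu : R) : R :=
  Derive (fun n => Derive (fun n' => psi mu n') n) nu.

Definition E2 (psi : R -> R -> R) (mu nu : R) : R :=
  (mu ^ 2 + nu ^ 2) ^ 3 *
  ( d_mumu psi mu nu
  + (3 * mu ^ 2 - nu ^ 2) / (mu * (mu ^ 2 + nu ^ 2)) * d_mu psi mu nu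
  + (3 * nu ^ 2 - mu ^ 2) / (nu * (mu ^ 2 + nu ^ 2)) * d_nu psi mu nu
  + d_nunu psi mu nu ).

Definition sep_psi (M N : R -> R) (mu nu : R) : R :=
  / (sqrt 2 * (mu ^ 2 + nu ^ 2)) * M mu * N nu.

Definition twice_diff_pos (f : R -> R) : Prop :=
  forall x, 0 < x -> ex_derive f x /\ ex_derive (Derive f) x.

(** * Bessel functions of order one (DLMF 10.2.2, 10.8.1, 10.25.2, 10.31.1) *)

Fixpoint harm (k : nat) : R :=
  match k with
  | O => 0
  | S m => harm m + / INR (S m)
  end.

Definition euler_gamma : R := real (Lim_seq (fun n => harm n - ln (INR n))).

(* digamma at positive integers: digamma_succ k = psi(k+1) = -gamma + H_k *)
Definition digamma_succ (k : nat) : R := - euler_gamma + harm k.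

Definition bcoef (k : nat) : R := / (INR (fact k) * INR (fact (S k))).

Definition J1 (x : R) : R :=
  (x / 2) * PSeries (fun k => bcoef k) (- (x ^ 2 / 4)).

Definition I1 (x : R) : R :=
  (x / 2) * PSeries (fun k => bcoef k) (x ^ 2 / 4).

Definition Y1 (x : R) : R :=
  - (2 / (PI * x)) + (2 / PI) * ln (x / 2) * J1 x
  - (/ PI) * (x / 2) *
    PSeries (fun k => (digamma_succ k + digamma_succ (S k)) * bcoef k)
            (- (x ^ 2 / 4)).

Definition K1 (x : R) : R :=
  / x + ln (x / 2) * I1 x
  - (x / 4) *
    PSeries (fun k => (digamma_succ k + digamma_succ (S k)) * bcoef k)
            (x ^ 2 / 4).

(* Main.v *)
Require Import Defs.
From Stdlib Require Import Reals Lra Arith Factorial.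
From Coquelicot Require Import Coquelicot.
Open Scope R_scope.
Ltac etafix := repeat match goal with |- context [Derive (fun x => ?f x)] => change (fun x => f x) with f end.

Lemma loc_pos x : 0 < x -> locally x (fun t => 0 < t).
Proof.
  intros Hx. exists (mkposreal x Hx). intros t Ht.
  change (Rabs (t - x) < x) in Ht. apply Rabs_lt_between in Ht. lra.
Qed.

Definition D2 (y y1 y2 : R -> R) : Prop :=
  forall x, 0 < x -> is_derive y x (y1 x) /\ is_derive y1 x (y2 x).

Lemma D2_Derive y y1 y2 : D2 y y1 y2 ->
  twice_diff_pos y /\ forall x, 0 < x -> Derive y x = y1 x /\ Derive (Derive y) x = y2 x.
Proof.
  intros H.
  assert (E : forall x, 0 < x -> Derive (Derive y) x = y2 x).
  { intros x Hx. rewrite (Derive_ext_loc _ y1).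
    - apply is_derive_unique, (H x Hx).
    - eapply filter_imp; [| apply (loc_pos x Hx)]. intros t Ht.
      apply is_derive_unique, (H t Ht). }
  split.
  - intros x Hx. split.
    + exists (y1 x). apply (H x Hx).
    + exists (y2 x). rewrite <- (E x Hx). apply Derive_correct.
      exists (y2 x). eapply is_derive_ext_loc; [| apply (H x Hx)].
      eapply filter_imp; [| apply (loc_pos x Hx)]. intros t Ht. simpl.
      symmetry. apply is_derive_unique, (H t Ht).
  - intros x Hx. split; [apply is_derive_unique, (H x Hx) | apply E; auto].
Qed.

Lemma twice_D2 y : twice_diff_pos y -> D2 y (Derive y) (Derive (Derive y)).
Proof.
  intros H x Hx. destruct (H x Hx) as [H1 H2]. split; apply Derive_correct; auto.
Qed.

Lemma D2_ext f y y1 y2 : (forall x, 0 < x -> f x = y x) -> D2 y y1 y2 -> D2 f y1 y2.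
Proof.
  intros E H x Hx. destruct (H x Hx) as [H1 H2]. split; auto.
  eapply is_derive_ext_loc; [| apply H1].
  eapply filter_imp; [| apply (loc_pos x Hx)]. intros t Ht. simpl. symmetry; auto.
Qed.

Lemma D2_lin y y1 y2 z z1 z2 c1 c2 : D2 y y1 y2 -> D2 z z1 z2 ->
  D2 (fun x => c1 * y x + c2 * z x) (fun x => c1 * y1 x + c2 * z1 x)
     (fun x => c1 * y2 x + c2 * z2 x).
Proof.
  intros Hy Hz x Hx. destruct (Hy x Hx) as [Hy1 Hy2]. destruct (Hz x Hx) as [Hz1 Hz2].
  split; apply @is_derive_plus; apply is_derive_scal; auto.
Qed.

Ltac nzt := match goal with |- ?a <> 0 => let H := fresh in assert (H: 0 < a) by (repeat apply Rmult_lt_0_compat; nra); lra end.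

Lemma E2_sep (psi : R -> R -> R) (c : R) M N :
  twice_diff_pos M -> twice_diff_pos N ->
  (forall m v, 0 < m -> 0 < v -> psi m v = c * / (m ^ 2 + v ^ 2) * M m * N v) ->
  forall mu nu, 0 < mu -> 0 < nu ->
  E2 psi mu nu = c * (mu ^ 2 + nu ^ 2) ^ 2 *
    ((Derive (Derive M) mu - / mu * Derive M mu) * N nu +
     M mu * (Derive (Derive N) nu - / nu * Derive N nu)).
Proof.
  intros HM HN Hpsi mu nu Hmu Hnu.
  assert (DM1 : forall v, 0 < v -> forall m, 0 < m ->
    is_derive (fun m => c * / (m ^ 2 + v ^ 2) * M m * N v) m
      (c * N v * (Derive M m / (m^2+v^2) - 2 * m * M m / (m^2+v^2)^2))).
  { intros v Hv m Hm. destruct (HM m Hm) as [H1 H2].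
    auto_derive. - repeat split; auto; nzt.
    - etafix. field. nra. }
  assert (DM2 : forall v, 0 < v -> forall m, 0 < m ->
    is_derive (fun m => c * N v * (Derive M m / (m^2+v^2) - 2 * m * M m / (m^2+v^2)^2)) m
      (c * N v * (Derive (Derive M) m / (m^2+v^2) - 4 * m * Derive M m / (m^2+v^2)^2
        - 2 * M m / (m^2+v^2)^2 + 8 * m^2 * M m / (m^2+v^2)^3))).
  { intros v Hv m Hm. destruct (HM m Hm) as [H1 H2].
    auto_derive. - repeat split; auto; nzt.
    - etafix. field. nra. }
  assert (DN1 : forall m, 0 < m -> forall v, 0 < v ->
    is_derive (fun v => c * / (m ^ 2 + v ^ 2) * M m * N v) v
      (c * M m * (Derive N v / (m^2+v^2) - 2 * v * N v / (m^2+v^2)^2))).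
  { intros m Hm v Hv. destruct (HN v Hv) as [H1 H2].
    auto_derive. - repeat split; auto; nzt.
    - etafix. field. nra. }
  assert (DN2 : forall m, 0 < m -> forall v, 0 < v ->
    is_derive (fun v => c * M m * (Derive N v / (m^2+v^2) - 2 * v * N v / (m^2+v^2)^2)) v
      (c * M m * (Derive (Derive N) v / (m^2+v^2) - 4 * v * Derive N v / (m^2+v^2)^2
        - 2 * N v / (m^2+v^2)^2 + 8 * v^2 * N v / (m^2+v^2)^3))).
  { intros m Hm v Hv. destruct (HN v Hv) as [H1 H2].
    auto_derive. - repeat split; auto; nzt.
    - etafix. field. nra. }
  assert (Em : forall m, 0 < m -> Derive (fun m' => psi m' nu) m =
      c * N nu * (Derive M m / (m^2+nu^2) - 2 * m * M m / (m^2+nu^2)^2)).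
  { intros m Hm. rewrite (Derive_ext_loc _ (fun m => c * / (m ^ 2 + nu ^ 2) * M m * N nu)).
    - apply is_derive_unique, DM1; auto.
    - eapply filter_imp; [| apply (loc_pos m Hm)]. intros t Ht. auto. }
  assert (Ev : forall v, 0 < v -> Derive (fun v' => psi mu v') v =
      c * M mu * (Derive N v / (mu^2+v^2) - 2 * v * N v / (mu^2+v^2)^2)).
  { intros v Hv. rewrite (Derive_ext_loc _ (fun v => c * / (mu ^ 2 + v ^ 2) * M mu * N v)).
    - apply is_derive_unique, DN1; auto.
    - eapply filter_imp; [| apply (loc_pos v Hv)]. intros t Ht. auto. }
  assert (Emm : Derive (fun m => Derive (fun m' => psi m' nu) m) mu =
      (c * N nu * (Derive (Derive M) mu / (mu^2+nu^2) - 4 * mu * Derive M mu / (mu^2+nu^2)^2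
        - 2 * M mu / (mu^2+nu^2)^2 + 8 * mu^2 * M mu / (mu^2+nu^2)^3))).
  { rewrite (Derive_ext_loc _
     (fun m => c * N nu * (Derive M m / (m^2+nu^2) - 2 * m * M m / (m^2+nu^2)^2))).
    - apply is_derive_unique, DM2; auto.
    - eapply filter_imp; [| apply (loc_pos mu Hmu)]. intros t Ht. auto. }
  assert (Evv : Derive (fun v => Derive (fun v' => psi mu v') v) nu =
      (c * M mu * (Derive (Derive N) nu / (mu^2+nu^2) - 4 * nu * Derive N nu / (mu^2+nu^2)^2
        - 2 * N nu / (mu^2+nu^2)^2 + 8 * nu^2 * N nu / (mu^2+nu^2)^3))).
  { rewrite (Derive_ext_loc _
     (fun v => c * M mu * (Derive N v / (mu^2+v^2) - 2 * v * N v / (mu^2+v^2)^2))).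
    - apply is_derive_unique, DN2; auto.
    - eapply filter_imp; [| apply (loc_pos nu Hnu)]. intros t Ht. auto. }
  unfold E2, d_mu, d_nu, d_mumu, d_nunu.
  rewrite Emm, Evv, Em, Ev by auto.
  field. split; [lra|]. split; [lra|]. nra.
Qed.

Lemma bcoef_S k : bcoef (S k) = bcoef k / (INR (S k) * INR (S (S k))).
Proof.
  unfold bcoef. change (fact (S (S k))) with (S (S k) * fact (S k))%nat.
  change (fact (S k)) with (S k * fact k)%nat. rewrite !mult_INR.
  pose proof (INR_fact_neq_0 k). pose proof (pos_INR k).
  rewrite !S_INR. field. repeat split; lra.
Qed.

Lemma bcoef_pos k : 0 < bcoef k.
Proof.
  unfold bcoef. apply Rinv_0_lt_compat, Rmult_lt_0_compat; apply lt_0_INR, lt_O_fact.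
Qed.

Lemma CV_radius_le_abs (a b : nat -> R) :
  (forall n, Rabs (a n) <= Rabs (b n)) -> Rbar_le (CV_radius b) (CV_radius a).
Proof.
  intros H. eapply is_lub_Rbar_subset; [| apply CV_radius_bounded | apply CV_radius_bounded].
  intros r [M HM]. exists M. intros n. eapply Rle_trans; [| apply (HM n)].
  rewrite !Rabs_mult. apply Rmult_le_compat_r; [apply Rabs_pos | apply H].
Qed.

Lemma CV_inf_cmp (a b : nat -> R) :
  (forall n, Rabs (a n) <= Rabs (b n)) -> CV_radius b = p_infty -> CV_radius a = p_infty.
Proof.
  intros H Hb. pose proof (CV_radius_le_abs a b H) as L. rewrite Hb in L.
  destruct (CV_radius a); simpl in L; tauto.
Qed.

Definition ccoef k := INR (S k) * bcoef k.

Lemma CV_ccoef : CV_radius ccoef = p_infty.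
Proof.
  apply CV_radius_infinite_DAlembert.
  - intros n. unfold ccoef. pose proof (bcoef_pos n). pose proof (lt_0_INR (S n) (Nat.lt_0_succ n)). nra.
  - apply is_lim_seq_ext with (fun n => / (INR (S n) * INR (S n))).
    + intros n. unfold ccoef. rewrite bcoef_S. pose proof (bcoef_pos n).
      pose proof (pos_INR n). rewrite !S_INR.
      match goal with |- _ = Rabs ?e => replace e with (/ ((INR n + 1) * (INR n + 1))) end.
      * rewrite Rabs_right; [reflexivity|]. apply Rle_ge, Rlt_le, Rinv_0_lt_compat. nra.
      * field. lra.
    + replace (Finite 0) with (Rbar_inv p_infty) by reflexivity.
      apply is_lim_seq_inv; [| discriminate].
      apply (is_lim_seq_mult _ _ p_infty p_infty); try (apply -> is_lim_seq_incr_1; apply is_lim_seq_INR).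
      reflexivity.
Qed.

Definition dcoef := fun k => (digamma_succ k + digamma_succ (S k)) * bcoef k.

Lemma harm_le k : 0 <= harm k <= INR k.
Proof.
  induction k as [|k IH].
  - simpl; lra.
  - replace (harm (S k)) with (harm k + / INR (S k)) by reflexivity.
    assert (INR (S k) = INR k + 1) by apply S_INR. rewrite H. pose proof (pos_INR k).
    assert (0 < / (INR k + 1) <= 1).
    { split. apply Rinv_0_lt_compat; lra.
      rewrite <- Rinv_1. apply Rinv_le_contravar; lra. }
    lra.
Qed.

Lemma CV_bcoef : CV_radius bcoef = p_infty.
Proof.
  apply (CV_inf_cmp _ ccoef); [| apply CV_ccoef].
  intros n. unfold ccoef. pose proof (bcoef_pos n). pose proof (pos_INR n). rewrite S_INR.
  rewrite !Rabs_right. all: nra.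
Qed.

Lemma CV_dcoef : CV_radius dcoef = p_infty.
Proof.
  assert (H : CV_radius (fun k => (2 * Rabs euler_gamma + 2) * ccoef k) = p_infty).
  { assert (Hc : 2 * Rabs euler_gamma + 2 <> 0) by (pose proof (Rabs_pos euler_gamma); lra).
    pose proof CV_ccoef as HH. rewrite <- (CV_radius_scal _ _ Hc) in HH. exact HH. }
  refine (CV_inf_cmp _ _ _ H).
  intros n. unfold dcoef, ccoef, digamma_succ. pose proof (bcoef_pos n).
  pose proof (harm_le n). pose proof (harm_le (S n)). rewrite S_INR in *.
  pose proof (Rabs_pos euler_gamma). pose proof (pos_INR n).
  assert (Rabs (- euler_gamma + harm n + (- euler_gamma + harm (S n))) <= 2 * Rabs euler_gamma + 2 * INR n + 1).
  { apply Rabs_le. pose proof (Rle_abs euler_gamma). pose proof (Rle_abs (- euler_gamma)).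
    rewrite Rabs_Ropp in *. lra. }
  rewrite Rabs_mult, (Rabs_right (bcoef n)) by lra.
  rewrite (Rabs_right ((2 * Rabs euler_gamma + 2) * ((INR n + 1) * bcoef n))) by (apply Rle_ge; apply Rmult_le_pos; nra).
  rewrite <- Rmult_assoc. apply Rmult_le_compat_r; [lra|]. nra.
Qed.

Definition Ent (a : nat -> R) := CV_radius a = p_infty.

Lemma Ent_in a x : Ent a -> Rbar_lt (Rabs x) (CV_radius a).
Proof. intros H; rewrite H; simpl; trivial. Qed.

Lemma Ent_lin s a b c : (forall n, s n = a n + c * b n) -> Ent a -> Ent b ->
  Ent s /\ forall x, PSeries s x = PSeries a x + c * PSeries b x.
Proof.
  intros Hs Ha Hb.
  assert (Hsc : Ent (PS_scal c b)).
  { apply (CV_inf_cmp _ (PS_scal (Rabs c + 1) b)).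
    - intros n. unfold PS_scal, scal; simpl; unfold mult; simpl.
      rewrite !Rabs_mult. apply Rmult_le_compat_r; [apply Rabs_pos|].
      pose proof (Rabs_pos c). rewrite (Rabs_right (Rabs c + 1)); lra.
    - rewrite CV_radius_scal; auto. pose proof (Rabs_pos c); lra. }
  split.
  - unfold Ent. rewrite (CV_radius_ext s (PS_plus a (PS_scal c b))).
    + pose proof (CV_radius_plus a (PS_scal c b)) as L. unfold Ent in *. rewrite Ha, Hsc in L.
      simpl in L. destruct (CV_radius (PS_plus a (PS_scal c b))); simpl in L; tauto.
    + intros n. rewrite Hs. reflexivity.
  - intros x. rewrite (PSeries_ext s (PS_plus a (PS_scal c b))).
    + rewrite PSeries_plus. rewrite PSeries_scal. reflexivity.
      apply CV_radius_inside, Ent_in; auto.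
      apply CV_radius_inside, Ent_in; auto.
    + intros n. rewrite Hs. reflexivity.
Qed.

Lemma Ent_incr a : Ent a -> Ent (PS_incr_1 a).
Proof. unfold Ent; intros; rewrite CV_radius_incr_1; auto. Qed.
Lemma Ent_der a : Ent a -> Ent (PS_derive a).
Proof. unfold Ent; intros; rewrite CV_radius_derive; auto. Qed.

Lemma Ent_b : Ent bcoef. Proof. exact CV_bcoef. Qed.
Lemma Ent_d : Ent dcoef. Proof. exact CV_dcoef. Qed.

Definition g0 := PSeries bcoef.
Definition g1 := PSeries (PS_derive bcoef).
Definition g2 := PSeries (PS_derive (PS_derive bcoef)).
Definition T0 := PSeries dcoef.
Definition T1 := PSeries (PS_derive dcoef).
Definition T2 := PSeries (PS_derive (PS_derive dcoef)).

Lemma Ent_deriv a x : Ent a -> is_derive (PSeries a) x (PSeries (PS_derive a) x).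
Proof. intros H. apply is_derive_PSeries, Ent_in; auto. Qed.

Lemma dg0 x : is_derive g0 x (g1 x). Proof. apply Ent_deriv, Ent_b. Qed.
Lemma dg1 x : is_derive g1 x (g2 x). Proof. apply Ent_deriv, Ent_der, Ent_b. Qed.
Lemma dT0 x : is_derive T0 x (T1 x). Proof. apply Ent_deriv, Ent_d. Qed.
Lemma dT1 x : is_derive T1 x (T2 x). Proof. apply Ent_deriv, Ent_der, Ent_d. Qed.

Lemma incr_eq a x : x * PSeries a x = PSeries (PS_incr_1 a) x.
Proof. rewrite PSeries_incr_1. reflexivity. Qed.

Lemma S1 t : t * g2 t + 2 * g1 t = g0 t.
Proof.
  unfold g0, g1, g2. rewrite incr_eq.
  destruct (Ent_lin (fun n => PS_incr_1 (PS_derive (PS_derive bcoef)) n + 2 * PS_derive bcoef n)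
     _ _ 2 (fun n => eq_refl) (Ent_incr _ (Ent_der _ (Ent_der _ Ent_b))) (Ent_der _ Ent_b)) as [_ E].
  rewrite <- E. apply PSeries_ext. intros [|k].
  - unfold PS_derive, PS_incr_1. rewrite bcoef_S. simpl INR. change (@zero (NormedModule.AbelianMonoid R_AbsRing R_NormedModule)) with 0. field.
  - unfold PS_derive, PS_incr_1. rewrite (bcoef_S (S k)). rewrite !S_INR. field.
    pose proof (pos_INR k). lra.
Qed.

Lemma harm_S k : harm (S k) = harm k + / INR (S k).
Proof. reflexivity. Qed.

Lemma bcoef_0 : bcoef 0 = 1.
Proof. unfold bcoef. replace (INR (fact 0) * INR (fact 1)) with 1 by (simpl; ring). apply Rinv_1. Qed.

Definition e0 (n : nat) : R := match n with O => 1 | S _ => 0 end.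

Lemma PSeries_e0 x : PSeries e0 x = 1.
Proof.
  rewrite PSeries_decr_1.
  - rewrite (PSeries_ext _ (fun _ => 0)) by reflexivity. rewrite PSeries_const_0. simpl. ring.
  - apply CV_radius_inside. rewrite (CV_inf_cmp e0 bcoef).
    + simpl; trivial.
    + intros [|n]; simpl. unfold bcoef; simpl. rewrite Rmult_1_r, Rinv_1. lra.
      rewrite Rabs_R0. apply Rabs_pos.
    + exact CV_bcoef.
Qed.

Ltac zfix := change (@zero (NormedModule.AbelianMonoid R_AbsRing R_NormedModule)) with 0.

Lemma S2 t : g0 t + 2 * t * g1 t - t * (t * T2 t + 2 * T1 t - T0 t) = 1.
Proof.
  unfold g0, g1, T0, T1, T2.
  replace (PSeries bcoef t + 2 * t * PSeries (PS_derive bcoef) t -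
   t * (t * PSeries (PS_derive (PS_derive dcoef)) t + 2 * PSeries (PS_derive dcoef) t -
      PSeries dcoef t)) with
   (PSeries bcoef t + 2 * (t * PSeries (PS_derive bcoef) t) +
    (-1) * (t * (t * PSeries (PS_derive (PS_derive dcoef)) t)) +
    (-2) * (t * PSeries (PS_derive dcoef) t) + 1 * (t * PSeries dcoef t)) by ring.
  rewrite !incr_eq.
  pose (A := PS_incr_1 (PS_derive bcoef)).
  pose (B := PS_incr_1 (PS_incr_1 (PS_derive (PS_derive dcoef)))).
  pose (C := PS_incr_1 (PS_derive dcoef)).
  pose (D := PS_incr_1 dcoef).
  assert (EA : Ent A) by (apply Ent_incr, Ent_der, Ent_b).
  assert (EB : Ent B) by (apply Ent_incr, Ent_incr, Ent_der, Ent_der, Ent_d).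
  assert (EC : Ent C) by (apply Ent_incr, Ent_der, Ent_d).
  assert (ED : Ent D) by (apply Ent_incr, Ent_d).
  destruct (Ent_lin (fun n => bcoef n + 2 * A n) _ _ 2 (fun n => eq_refl) Ent_b EA) as [E1 V1].
  destruct (Ent_lin (fun n => (bcoef n + 2 * A n) + (-1) * B n) _ _ (-1) (fun n => eq_refl) E1 EB) as [E2 V2].
  destruct (Ent_lin (fun n => ((bcoef n + 2 * A n) + (-1) * B n) + (-2) * C n) _ _ (-2) (fun n => eq_refl) E2 EC) as [E3 V3].
  destruct (Ent_lin (fun n => (((bcoef n + 2 * A n) + (-1) * B n) + (-2) * C n) + 1 * D n) _ _ 1 (fun n => eq_refl) E3 ED) as [E4 V4].
  fold A B C D. rewrite <- V1, <- V2, <- V3, <- V4.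
  transitivity (PSeries e0 t); [| apply PSeries_e0]. apply PSeries_ext.
  intros [|[|k]]; unfold A, B, C, D, PS_incr_1, PS_derive, dcoef, digamma_succ; zfix.
  - unfold e0. rewrite bcoef_0. field.
  - unfold e0. rewrite !harm_S. replace (harm 0) with 0 by reflexivity. rewrite bcoef_S, bcoef_0.
    replace (INR 1) with 1 by reflexivity. replace (INR 2) with 2 by (simpl; ring). field.
  - rewrite !harm_S. rewrite !bcoef_S. rewrite !S_INR. simpl e0. field.
    pose proof (pos_INR k). repeat split; lra.
Qed.

Lemma sq_D2 (Y Y1 Y2 : R -> R) :
  (forall s, 0 < s -> is_derive Y s (Y1 s) /\ is_derive Y1 s (Y2 s)) ->
  D2 (fun m => Y (m ^ 2)) (fun m => 2 * m * Y1 (m ^ 2))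
     (fun m => 2 * Y1 (m ^ 2) + 4 * m ^ 2 * Y2 (m ^ 2)).
Proof.
  intros H m Hm. assert (Hs : 0 < m ^ 2) by nra. destruct (H _ Hs) as [H1 H2].
  split.
  - auto_derive.
    + exists (Y1 (m^2)). exact H1.
    + etafix. replace (m*(m*1)) with (m^2) by ring. rewrite (is_derive_unique _ _ _ H1). ring.
  - auto_derive.
    + exists (Y2 (m^2)). exact H2.
    + etafix. replace (m*(m*1)) with (m^2) by ring. rewrite (is_derive_unique _ _ _ H2). ring.
Qed.

Section S.
Variable a : R.
Definition P s := s * g0 (a * s).
Definition P1 s := g0 (a * s) + a * s * g1 (a * s).
Definition P2 s := 2 * a * g1 (a * s) + a ^ 2 * s * g2 (a * s).
Definition Lq s := ln s * P s.
Definition Lq1 s := g0 (a * s) + ln s * P1 s.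
Definition Lq2 s := a * g1 (a * s) + P1 s / s + ln s * P2 s.
Definition Q s := s * T0 (a * s).
Definition Q1 s := T0 (a * s) + a * s * T1 (a * s).
Definition Q2 s := 2 * a * T1 (a * s) + a ^ 2 * s * T2 (a * s).

Lemma Dg0 x : Derive g0 x = g1 x. Proof. apply is_derive_unique, dg0. Qed.
Lemma Dg1 x : Derive g1 x = g2 x. Proof. apply is_derive_unique, dg1. Qed.
Lemma DT0 x : Derive T0 x = T1 x. Proof. apply is_derive_unique, dT0. Qed.
Lemma DT1 x : Derive T1 x = T2 x. Proof. apply is_derive_unique, dT1. Qed.
Lemma eg0 x : ex_derive g0 x. Proof. eexists; apply dg0. Qed.
Lemma eg1 x : ex_derive g1 x. Proof. eexists; apply dg1. Qed.
Lemma eT0 x : ex_derive T0 x. Proof. eexists; apply dT0. Qed.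
Lemma eT1 x : ex_derive T1 x. Proof. eexists; apply dT1. Qed.

Ltac dfin := repeat split; auto using eg0, eg1, eT0, eT1;
  etafix; rewrite ?Dg0, ?Dg1, ?DT0, ?DT1.

Lemma P_der s : is_derive P s (P1 s) /\ is_derive P1 s (P2 s).
Proof.
  unfold P, P1, P2. split; auto_derive; dfin; ring.
Qed.
Lemma Q_der s : is_derive Q s (Q1 s) /\ is_derive Q1 s (Q2 s).
Proof.
  unfold Q, Q1, Q2. split; auto_derive; dfin; ring.
Qed.
Lemma Lq_der s : 0 < s -> is_derive Lq s (Lq1 s) /\ is_derive Lq1 s (Lq2 s).
Proof.
  intros Hs. unfold Lq, Lq1, Lq2, P, P1, P2. split; auto_derive; dfin; try lra; field; lra.
Qed.

Lemma P_ode s : s * P2 s = a * P s.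
Proof.
  unfold P, P2. rewrite <- (S1 (a * s)). ring.
Qed.

Variables c0 bb kk ll : R.
Definition YG s := c0 + bb * Lq s + kk * P s + ll * Q s.
Definition YG1 s := bb * Lq1 s + kk * P1 s + ll * Q1 s.
Definition YG2 s := bb * Lq2 s + kk * P2 s + ll * Q2 s.

Lemma YG_der s : 0 < s -> is_derive YG s (YG1 s) /\ is_derive YG1 s (YG2 s).
Proof.
  intros Hs. destruct (P_der s) as [HP1 HP2]. destruct (Q_der s) as [HQ1 HQ2].
  destruct (Lq_der s Hs) as [HL1 HL2]. unfold YG, YG1, YG2. split.
  - auto_derive; [repeat split; eexists; eauto|].
    etafix. rewrite (is_derive_unique _ _ _ HP1), (is_derive_unique _ _ _ HQ1), (is_derive_unique _ _ _ HL1). ring.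
  - auto_derive; [repeat split; eexists; eauto|].
    etafix. rewrite (is_derive_unique _ _ _ HP2), (is_derive_unique _ _ _ HQ2), (is_derive_unique _ _ _ HL2). ring.
Qed.

Lemma YG_ode s : 0 < s -> bb = a * c0 -> ll = - (a * c0) -> s * YG2 s = a * YG s.
Proof.
  intros Hs Hb Hl.
  assert (EL : s * Lq2 s - a * Lq s = g0 (a * s) + 2 * (a * s) * g1 (a * s)).
  { replace (s * Lq2 s - a * Lq s) with (s * a * g1 (a * s) + P1 s + ln s * (s * P2 s - a * P s))
      by (unfold Lq2, Lq; field; lra).
    rewrite P_ode. unfold P1. ring. }
  assert (EQ : s * Q2 s - a * Q s = a * s * (a * s * T2 (a * s) + 2 * T1 (a * s) - T0 (a * s)))
    by (unfold Q2, Q; ring).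
  assert (E : s * YG2 s - a * YG s = bb * (s * Lq2 s - a * Lq s) + kk * (s * P2 s - a * P s)
     + ll * (s * Q2 s - a * Q s) - a * c0) by (unfold YG2, YG; ring).
  rewrite EL, EQ, P_ode, Hb, Hl in E.
  pose proof (S2 (a * s)) as H2.
  assert (s * YG2 s - a * YG s = a * c0 * ((g0 (a * s) + 2 * (a * s) * g1 (a * s) -
     (a * s) * ((a * s) * T2 (a * s) + 2 * T1 (a * s) - T0 (a * s))) - 1)) by (rewrite E; ring).
  rewrite H2 in H. lra.
Qed.
End S.

Definition ODE (c : R) (y y1 y2 : R -> R) := forall m, 0 < m -> y2 m - / m * y1 m = c * y m.

Lemma const_pos (h : R -> R) : (forall x, 0 < x -> is_derive h x 0) ->
  forall x, 0 < x -> h x = h 1.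
Proof.
  intros Hd x Hx.
  destruct (MVT_gen h 1 x (fun _ => 0)) as [c [_ Hc]].
  - intros t Ht. apply Hd. pose proof (Rmin_glb_lt 1 x 0). lra.
  - intros t Ht. apply continuity_pt_filterlim. apply (@ex_derive_continuous R_AbsRing R_NormedModule).
    exists 0. apply Hd. assert (0 < Rmin 1 x) by (apply Rmin_glb_lt; lra). lra.
  - lra.
Qed.

Lemma wronsk c y y1 y2 z z1 z2 : D2 y y1 y2 -> D2 z z1 z2 -> ODE c y y1 y2 -> ODE c z z1 z2 ->
  exists C, forall m, 0 < m -> y m * z1 m - y1 m * z m = C * m.
Proof.
  intros Dy Dz Oy Oz.
  set (h := fun m => (y m * z1 m - y1 m * z m) / m).
  assert (Hd : forall m, 0 < m -> is_derive h m 0).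
  { intros m Hm. destruct (Dy m Hm) as [Hy1 Hy2]. destruct (Dz m Hm) as [Hz1 Hz2].
    unfold h. auto_derive.
    - repeat split; try (eexists; eauto); lra.
    - etafix. rewrite (is_derive_unique _ _ _ Hy1), (is_derive_unique _ _ _ Hy2),
        (is_derive_unique _ _ _ Hz1), (is_derive_unique _ _ _ Hz2).
      assert (Ey : y2 m = / m * y1 m + c * y m) by (pose proof (Oy m Hm); lra).
      assert (Ez : z2 m = / m * z1 m + c * z m) by (pose proof (Oz m Hm); lra).
      rewrite Ey, Ez. field. lra. }
  exists (h 1). intros m Hm. rewrite <- (const_pos h Hd m Hm). unfold h. field. lra.
Qed.

Lemma cont_right (f : R -> R) K : continuity_pt f 0 -> (forall s, 0 < s -> f s = K) -> f 0 = K.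
Proof.
  intros Hc Hs. destruct (Req_dec (f 0) K) as [|Hne]; auto. exfalso.
  assert (He : 0 < Rabs (f 0 - K)) by (apply Rabs_pos_lt; lra).
  destruct (Hc _ He) as [alp [Ha Hx]].
  specialize (Hx (alp / 2)). simpl in Hx. unfold R_dist in Hx.
  rewrite Hs in Hx by lra. rewrite (Rabs_minus_sym K (f 0)) in Hx.
  assert (Rabs (alp / 2 - 0) < alp) by (rewrite Rminus_0_r, Rabs_right; lra).
  assert (Rabs (f 0 - K) < Rabs (f 0 - K)).
  { apply Hx. split; [| auto]. unfold D_x, no_cond. split; [exact I | intro; lra]. }
  lra.
Qed.

Section G.
Variables a k c0 bb kk ll : R.
Hypothesis Hk : k <> 0.
Hypothesis Hc0 : c0 <> 0.
Hypothesis Hbb : bb = a * c0.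
Hypothesis Hll : ll = - (a * c0).

Definition FF m := k * P a (m ^ 2).
Definition FF1 m := 2 * m * (k * P1 a (m ^ 2)).
Definition FF2 m := 2 * (k * P1 a (m ^ 2)) + 4 * m ^ 2 * (k * P2 a (m ^ 2)).
Definition GG m := YG a c0 bb kk ll (m ^ 2).
Definition GG1 m := 2 * m * YG1 a bb kk ll (m ^ 2).
Definition GG2 m := 2 * YG1 a bb kk ll (m ^ 2) + 4 * m ^ 2 * YG2 a bb kk ll (m ^ 2).

Lemma DFF : D2 FF FF1 FF2.
Proof.
  apply (sq_D2 (fun s => k * P a s) (fun s => k * P1 a s) (fun s => k * P2 a s)).
  intros s _. destruct (P_der a s). split; apply is_derive_scal; auto.
Qed.

Lemma DGG : D2 GG GG1 GG2.
Proof. apply sq_D2. intros s Hs. apply YG_der; auto. Qed.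

Lemma OFF : ODE (4 * a) FF FF1 FF2.
Proof.
  intros m Hm. unfold FF, FF1, FF2. pose proof (P_ode a (m ^ 2)).
  replace (4 * m ^ 2 * (k * P2 a (m ^ 2))) with (4 * k * (m ^ 2 * P2 a (m ^ 2))) by ring.
  rewrite H. field. lra.
Qed.

Lemma OGG : ODE (4 * a) GG GG1 GG2.
Proof.
  intros m Hm. unfold GG, GG1, GG2. pose proof (YG_ode a c0 bb kk ll (m ^ 2)) as H.
  replace (4 * m ^ 2 * YG2 a bb kk ll (m ^ 2)) with (4 * (m ^ 2 * YG2 a bb kk ll (m ^ 2))) by ring.
  rewrite H; auto; [|nra]. field. lra.
Qed.

Definition Ew s := bb * P a s * g0 (a * s) + ll * (P a s * Q1 a s - P1 a s * Q a s) - c0 * P1 a s.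

Lemma W_FG m : 0 < m -> FF m * GG1 m - FF1 m * GG m = 2 * m * k * Ew (m ^ 2).
Proof.
  intros Hm. unfold FF, FF1, GG, GG1, Ew, YG, YG1, Lq, Lq1. ring.
Qed.

Lemma Ew0 : Ew 0 = - c0.
Proof.
  unfold Ew, P, P1, Q. rewrite !Rmult_0_r, !Rmult_0_l. unfold g0. rewrite PSeries_0, bcoef_0. ring.
Qed.

Lemma Ew_cont : continuity_pt Ew 0.
Proof.
  apply continuity_pt_filterlim. apply (@ex_derive_continuous R_AbsRing R_NormedModule).
  unfold Ew, P, P1, Q, Q1. auto_derive. repeat split; auto using eg0, eg1, eT0, eT1.
Qed.

Lemma W_FG_val : forall m, 0 < m -> FF m * GG1 m - FF1 m * GG m = (- 2 * k * c0) * m.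
Proof.
  destruct (wronsk (4 * a) _ _ _ _ _ _ DFF DGG OFF OGG) as [C HC].
  assert (Hs : forall s, 0 < s -> Ew s = C / (2 * k)).
  { intros s Hs. pose proof (HC (sqrt s) (sqrt_lt_R0 s Hs)) as H.
    rewrite W_FG in H by (apply sqrt_lt_R0; auto).
    rewrite <- Rsqr_pow2, Rsqr_sqrt in H by lra.
    pose proof (sqrt_lt_R0 s Hs).
    apply (Rmult_eq_reg_l (2 * sqrt s * k)); [| apply Rmult_integral_contrapositive; split; lra].
    rewrite H. field. auto. }
  pose proof (cont_right Ew _ Ew_cont Hs) as H0. rewrite Ew0 in H0.
  intros m Hm. rewrite HC by auto. f_equal.
  replace C with (2 * k * (C / (2 * k))) by (field; auto). rewrite <- H0. ring.
Qed.

Lemma gen_thm (M : R -> R) :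
  (twice_diff_pos M /\ forall mu, 0 < mu ->
     Derive (Derive M) mu - / mu * Derive M mu = 4 * a * M mu) <->
  exists c1 c2 : R, forall mu, 0 < mu -> M mu = c1 * FF mu + c2 * GG mu.
Proof.
  split.
  - intros [HM HO]. pose proof (twice_D2 M HM) as DM.
    destruct (wronsk (4 * a) _ _ _ _ _ _ DM DFF HO OFF) as [al Hal].
    destruct (wronsk (4 * a) _ _ _ _ _ _ DM DGG HO OGG) as [be Hbe].
    set (g := - 2 * k * c0).
    assert (Hg : g <> 0) by (unfold g; apply Rmult_integral_contrapositive; split; [apply Rmult_integral_contrapositive; split|]; lra).
    exists (be / g), (- al / g). intros mu Hmu.
    pose proof (Hal mu Hmu). pose proof (Hbe mu Hmu). pose proof (W_FG_val mu Hmu).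
    assert (E : M mu * (g * mu) = FF mu * (be * mu) - GG mu * (al * mu)).
    { fold g in H1. rewrite <- H1, <- H, <- H0. ring. }
    apply (Rmult_eq_reg_r (g * mu)); [| apply Rmult_integral_contrapositive; split; lra].
    rewrite E. field. auto.
  - intros [c1 [c2 Hc]].
    assert (DM : D2 M (fun x => c1 * FF1 x + c2 * GG1 x) (fun x => c1 * FF2 x + c2 * GG2 x)).
    { apply (D2_ext _ (fun x => c1 * FF x + c2 * GG x)); auto. apply D2_lin; [apply DFF | apply DGG]. }
    destruct (D2_Derive _ _ _ DM) as [HT HD]. split; auto.
    intros mu Hmu. destruct (HD mu Hmu) as [E1 E2]. rewrite E1, E2, Hc by auto.
    pose proof (OFF mu Hmu). pose proof (OGG mu Hmu).
    replace (c1 * FF2 mu + c2 * GG2 mu - / mu * (c1 * FF1 mu + c2 * GG1 mu)) with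
      (c1 * (FF2 mu - / mu * FF1 mu) + c2 * (GG2 mu - / mu * GG1 mu)) by ring.
    rewrite H, H0. ring.
Qed.

Lemma sol_FG c1 c2 : twice_diff_pos (fun m => c1 * FF m + c2 * GG m) /\
  forall mu, 0 < mu -> Derive (Derive (fun m => c1 * FF m + c2 * GG m)) mu
     - / mu * Derive (fun m => c1 * FF m + c2 * GG m) mu = 4 * a * (c1 * FF mu + c2 * GG mu).
Proof.
  apply (gen_thm (fun m => c1 * FF m + c2 * GG m)). exists c1, c2. auto.
Qed.
End G.

Lemma ln_sq m : 0 < m -> ln (m ^ 2) = 2 * ln m.
Proof. intros Hm. rewrite ln_pow by auto. simpl INR. ring. Qed.

Lemma ln_nm n m : 0 < n -> 0 < m -> ln (n * m / 2) = ln (n / 2) + ln m.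
Proof.
  intros Hn Hm. replace (n * m / 2) with (n / 2 * m) by field. apply ln_mult; lra.
Qed.

Section I.
Variable n : R.
Hypothesis Hn : 0 < n.
Definition aI := n ^ 2 / 4.
Definition kI := n / 2.
Definition c0I := / n.
Definition bbI := aI * c0I.
Definition kkI := ln (n / 2) * (n / 2).
Definition llI := - (aI * c0I).

Lemma FI_eq mu : FF aI kI mu = mu * I1 (n * mu).
Proof.
  unfold FF, P, I1, g0, aI, kI.
  replace ((n * mu) ^ 2 / 4) with (n ^ 2 / 4 * mu ^ 2) by field. change (fun k : nat => bcoef k) with bcoef. field.
Qed.

Lemma GI_eq mu : 0 < mu -> GG aI c0I bbI kkI llI mu = mu * K1 (n * mu).
Proof.
  intros Hmu. unfold GG, YG, Lq, P, Q, K1, I1, g0, T0, bbI, kkI, llI, aI, c0I.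
  rewrite ln_sq, ln_nm by auto.
  replace ((n * mu) ^ 2 / 4) with (n ^ 2 / 4 * mu ^ 2) by field.
  unfold dcoef. change (fun k : nat => bcoef k) with bcoef. field. lra.
Qed.

Lemma I_thm (M : R -> R) :
  (twice_diff_pos M /\ forall mu, 0 < mu ->
     Derive (Derive M) mu - / mu * Derive M mu = n ^ 2 * M mu) <->
  exists c1 c2 : R, forall mu, 0 < mu ->
     M mu = c1 * mu * I1 (n * mu) + c2 * mu * K1 (n * mu).
Proof.
  assert (H4 : n ^ 2 = 4 * aI) by (unfold aI; field).
  rewrite H4.
  assert (Hk : kI <> 0) by (unfold kI; lra).
  assert (Hc : c0I <> 0) by (unfold c0I; apply Rinv_neq_0_compat; lra).
  rewrite (gen_thm aI kI c0I bbI kkI llI Hk Hc eq_refl eq_refl M).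
  split; intros [c1 [c2 H]]; exists c1, c2; intros mu Hmu; rewrite H by auto;
    rewrite FI_eq, GI_eq by auto; ring.
Qed.

Lemma I_sol c1 c2 : twice_diff_pos (fun m => c1 * m * I1 (n * m) + c2 * m * K1 (n * m)) /\
  forall mu, 0 < mu -> Derive (Derive (fun m => c1 * m * I1 (n * m) + c2 * m * K1 (n * m))) mu
   - / mu * Derive (fun m => c1 * m * I1 (n * m) + c2 * m * K1 (n * m)) mu
   = n ^ 2 * (c1 * mu * I1 (n * mu) + c2 * mu * K1 (n * mu)).
Proof. apply I_thm. exists c1, c2. auto. Qed.
End I.

Section J.
Variable n : R.
Hypothesis Hn : 0 < n.
Definition aJ := - (n ^ 2 / 4).
Definition kJ := n / 2.
Definition c0J := - (2 / (PI * n)).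
Definition bbJ := aJ * c0J.
Definition kkJ := 2 / PI * ln (n / 2) * (n / 2).
Definition llJ := - (aJ * c0J).

Lemma FJ_eq mu : FF aJ kJ mu = mu * J1 (n * mu).
Proof.
  unfold FF, P, J1, g0, aJ, kJ.
  replace (- ((n * mu) ^ 2 / 4)) with (- (n ^ 2 / 4) * mu ^ 2) by field. change (fun k : nat => bcoef k) with bcoef. field.
Qed.

Lemma GJ_eq mu : 0 < mu -> GG aJ c0J bbJ kkJ llJ mu = mu * Y1 (n * mu).
Proof.
  intros Hmu. pose proof PI_RGT_0.
  unfold GG, YG, Lq, P, Q, Y1, J1, g0, T0, bbJ, kkJ, llJ, aJ, c0J.
  rewrite ln_sq, ln_nm by auto.
  replace (- ((n * mu) ^ 2 / 4)) with (- (n ^ 2 / 4) * mu ^ 2) by field.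
  unfold dcoef. change (fun k : nat => bcoef k) with bcoef. field. lra.
Qed.

Lemma J_thm (N : R -> R) :
  (twice_diff_pos N /\ forall nu, 0 < nu ->
     Derive (Derive N) nu - / nu * Derive N nu = - (n ^ 2) * N nu) <->
  exists c3 c4 : R, forall nu, 0 < nu ->
     N nu = c3 * nu * J1 (n * nu) + c4 * nu * Y1 (n * nu).
Proof.
  assert (H4 : - (n ^ 2) = 4 * aJ) by (unfold aJ; field).
  rewrite H4.
  assert (Hk : kJ <> 0) by (unfold kJ; lra).
  assert (Hc : c0J <> 0).
  { unfold c0J. pose proof PI_RGT_0. apply Ropp_neq_0_compat.
    unfold Rdiv. apply Rmult_integral_contrapositive; split; [lra|].
    apply Rinv_neq_0_compat. nra. }
  rewrite (gen_thm aJ kJ c0J bbJ kkJ llJ Hk Hc eq_refl eq_refl N).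
  split; intros [c1 [c2 H]]; exists c1, c2; intros mu Hmu; rewrite H by auto;
    rewrite FJ_eq, GJ_eq by auto; ring.
Qed.
End J.

Theorem mainTheorem3 :
  (* (1) R-separation with R = sqrt 2 (mu^2+nu^2) *)
  (forall M N : R -> R,
     twice_diff_pos M -> twice_diff_pos N ->
     (forall x, 0 < x -> M x <> 0) -> (forall x, 0 < x -> N x <> 0) ->
     ((forall mu nu, 0 < mu -> 0 < nu -> E2 (sep_psi M N) mu nu = 0) <->
      exists lam : R,
        (forall mu, 0 < mu ->
           Derive (Derive M) mu / M mu - / mu * (Derive M mu / M mu) = lam) /\
        (forall nu, 0 < nu ->
           - (Derive (Derive N) nu / N nu) + / nu * (Derive N nu / N nu) = lam)))
  /\
  (* (2) for lambda = n^2 > 0 the solutions are exactly the Bessel combinations *)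
  (forall n : R, 0 < n ->
     (forall M : R -> R,
        (twice_diff_pos M /\
         forall mu, 0 < mu ->
           Derive (Derive M) mu - / mu * Derive M mu = n ^ 2 * M mu) <->
        exists c1 c2 : R, forall mu, 0 < mu ->
           M mu = c1 * mu * I1 (n * mu) + c2 * mu * K1 (n * mu))
     /\
     (forall N : R -> R,
        (twice_diff_pos N /\
         forall nu, 0 < nu ->
           Derive (Derive N) nu - / nu * Derive N nu = - (n ^ 2) * N nu) <->
        exists c3 c4 : R, forall nu, 0 < nu ->
           N nu = c3 * nu * J1 (n * nu) + c4 * nu * Y1 (n * nu)))
  /\
  (* (3) the separated solutions *)
  (forall n c1 c2 c3 c4 : R, 0 < n ->
     forall mu nu, 0 < mu -> 0 < nu ->
       E2 (fun m v => / (m ^ 2 + v ^ 2) *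
                      (c1 * m * I1 (n * m) + c2 * m * K1 (n * m)) *
                      (c3 * v * J1 (n * v) + c4 * v * Y1 (n * v))) mu nu = 0).
Proof.
  split; [| split].
  - intros M N HM HN HM0 HN0.
    assert (HE : forall mu nu, 0 < mu -> 0 < nu -> E2 (sep_psi M N) mu nu =
      / sqrt 2 * (mu ^ 2 + nu ^ 2) ^ 2 *
      ((Derive (Derive M) mu - / mu * Derive M mu) * N nu +
       M mu * (Derive (Derive N) nu - / nu * Derive N nu))).
    { intros mu nu Hmu Hnu. apply E2_sep; auto.
      intros m v Hm Hv. unfold sep_psi. rewrite Rinv_mult. ring. }
    assert (Hs : 0 < / sqrt 2) by (apply Rinv_0_lt_compat, sqrt_lt_R0; lra).
    split.
    + intros H0.
      assert (Hsum : forall mu nu, 0 < mu -> 0 < nu ->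
        (Derive (Derive M) mu - / mu * Derive M mu) * N nu +
         M mu * (Derive (Derive N) nu - / nu * Derive N nu) = 0).
      { intros mu nu Hmu Hnu. pose proof (H0 mu nu Hmu Hnu) as H. rewrite HE in H by auto.
        apply Rmult_integral in H. destruct H as [H|H]; auto.
        exfalso. apply Rmult_integral in H. destruct H as [H|H]; [lra|].
        assert (0 < (mu ^ 2 + nu ^ 2) ^ 2) by (apply pow_lt; nra). lra. }
      exists ((Derive (Derive M) 1 - / 1 * Derive M 1) / M 1).
      assert (Hx : forall mu, 0 < mu ->
        (Derive (Derive M) mu - / mu * Derive M mu) / M mu =
        - ((Derive (Derive N) 1 - / 1 * Derive N 1) / N 1)).
      { intros mu Hmu. pose proof (Hsum mu 1 Hmu Rlt_0_1) as Hq. pose proof (HM0 mu Hmu).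
        pose proof (HN0 1 Rlt_0_1).
        set (X := Derive (Derive M) mu - / mu * Derive M mu) in *.
        set (Y := Derive (Derive N) 1 - / 1 * Derive N 1) in *.
        replace (X / M mu) with ((X * N 1) / (M mu * N 1)) by (field; split; auto).
        replace (X * N 1) with (- (M mu * Y)) by lra.
        field; split; auto. }
      split.
      * intros mu Hmu. pose proof (HM0 mu Hmu).
        transitivity ((Derive (Derive M) mu - / mu * Derive M mu) / M mu).
        { field. split; auto; lra. }
        rewrite (Hx mu Hmu), (Hx 1 Rlt_0_1). reflexivity.
      * intros nu Hnu. rewrite (Hx 1 Rlt_0_1).
        pose proof (Hsum 1 nu Rlt_0_1 Hnu) as Hq. pose proof (HM0 1 Rlt_0_1). pose proof (HN0 nu Hnu).
        pose proof (HN0 1 Rlt_0_1). pose proof (Hx 1 Rlt_0_1) as Hx1.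
        set (X := Derive (Derive M) 1 - / 1 * Derive M 1) in *.
        set (Y1 := Derive (Derive N) 1 - / 1 * Derive N 1) in *.
        transitivity (- ((Derive (Derive N) nu - / nu * Derive N nu) / N nu)).
        { field. split; auto; lra. }
        set (Y := Derive (Derive N) nu - / nu * Derive N nu) in *.
        rewrite <- Hx1.
        replace (Y / N nu) with ((M 1 * Y) / (M 1 * N nu)) by (field; split; auto).
        replace (M 1 * Y) with (- (X * N nu)) by lra.
        field; split; auto.
    + intros [lam [HlM HlN]] mu nu Hmu Hnu. rewrite HE by auto.
      pose proof (HlM mu Hmu). pose proof (HlN nu Hnu).
      pose proof (HM0 mu Hmu). pose proof (HN0 nu Hnu).
      assert (E1 : Derive (Derive M) mu - / mu * Derive M mu = lam * M mu).
      { rewrite <- H. field. split; auto; lra. }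
      assert (E2' : Derive (Derive N) nu - / nu * Derive N nu = - lam * N nu).
      { rewrite <- H0. field. split; auto; lra. }
      rewrite E1, E2'. ring.
  - intros n Hn. split; [apply I_thm | apply J_thm]; auto.
  - intros n c1 c2 c3 c4 Hn mu nu Hmu Hnu.
    destruct (I_sol n Hn c1 c2) as [HA HAo].
    destruct (J_thm n Hn (fun m => c3 * m * J1 (n * m) + c4 * m * Y1 (n * m))) as [_ HB].
    destruct HB as [HB HBo]. { exists c3, c4. auto. }
    rewrite (E2_sep _ 1 _ _ HA HB) by (auto; intros; ring).
    rewrite HAo, HBo by auto. ring.
Qed.
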